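(* For every positive integer $n$, \[ Z^{+}(n)=\frac{1+(-1)^{n-1}}{2n}+\frac{(n-1)!}{2^{n}}\sum_{r=1}^{n}\frac{2^{r}}{r}, \] where $Z^{+}(n)=\sum_{k=0}^{n-1}\frac{(-1)^{k}+k!(n-k-1)!}{n}$. *)

(* Defs.v *)
From mathcomp Require Import all_boot all_order all_algebra.
Set Implicit Arguments. Unset Strict Implicit. Unset Printing Implicit Defensive.
Import Order.TTheory GRing.Theory Num.Theory.
Local Open Scope ring_scope.

Definition Zplus (n : nat) : rat :=
  \sum_(0 <= k < n) (((-1) ^+ k + (k`! * (n - k - 1)`!)%:R) / n%:R).

(* Main.v *)
Require Import Defs.
From mathcomp Require Import all_boot all_order all_algebra.
From mathcomp Require Import ring lra zify.
Import Order.TTheory GRing.Theory Num.Theory.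
Local Open Scope ring_scope.

Definition S (m : nat) : nat := (\sum_(0 <= k < m.+1) k`! * (m - k)`!)%N.

Lemma S_rec m : (2 * S m.+1 = m.+2 * S m + 2 * (m.+1)`!)%N.
Proof.
have E : (m.+2 * S m = \sum_(0 <= k < m.+1) (k.+1`! * (m - k)`!)
                      + \sum_(0 <= k < m.+1) (k`! * (m.+1 - k)`!))%N.
  rewrite /S big_distrr -big_split /=; apply: eq_big_nat => k /andP[_ hk].
  have -> : (m.+1 - k = (m - k).+1)%N by lia.
  rewrite !factS; set a := k`!; set b := (m-k)`!.
  have -> : (m = k + (m - k))%N by lia.
  rewrite -/b; set d := (m - k)%N.
  have -> : (k + (m - k) - k = d)%N by lia.
  rewrite -/b; ring.
have E1 : (S m.+1 = m.+1`! + \sum_(0 <= k < m.+1) (k.+1`! * (m - k)`!))%N.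
  by rewrite /S big_nat_recl //= fact0 subn0 mul1n.
have E2 : (S m.+1 = \sum_(0 <= k < m.+1) (k`! * (m.+1 - k)`!) + m.+1`!)%N.
  by rewrite /S big_nat_recr //= subnn fact0 muln1.
lia.
Qed.

Lemma S_rat m : (S m)%:R * 2 ^+ m.+1 =
  (m.+1)`!%:R * \sum_(1 <= r < m.+2) (2 ^+ r / r%:R) :> rat.
Proof.
elim: m => [|m IH].
  rewrite /S big_nat1 big_nat1 subnn fact0 muln1 divr1 -[(1`!)%N]/1%N; ring.
have h := S_rec m.
have h' : 2 * (S m.+1)%:R = (m.+2)%:R * (S m)%:R + 2 * (m.+1)`!%:R :> rat.
  by rewrite -natrM h natrD !natrM.
rewrite big_nat_recr //= exprS.
have -> : (S m.+1)%:R * (2 * 2 ^+ m.+1) = (2 * (S m.+1)%:R) * 2 ^+ m.+1 :> rat by ring.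
rewrite h' mulrDl.
have -> : (m.+2)%:R * (S m)%:R * 2 ^+ m.+1 = (m.+2)%:R * ((S m)%:R * 2 ^+ m.+1) :> rat by ring.
rewrite IH [(m.+2)`!]factS natrM.
have hm : (m.+2)%:R != 0 :> rat by rewrite pnatr_eq0.
rewrite exprS; field.
have hm0 : (0:rat) <= m%:R by apply: ler0n.
apply/eqP => E; lra.
Qed.

Lemma alt_sum n : (0 < n)%N ->
  2 * \sum_(0 <= k < n) (-1) ^+ k = 1 + (-1) ^+ (n - 1) :> rat.
Proof.
case: n => // n _; elim: n => [|n IH]; first by rewrite big_nat1 /=; field.
rewrite big_nat_recr //= mulrDr IH !subn1 /= exprS; ring.
Qed.

Theorem mainTheorem5 (n : nat) (hn : (0 < n)%N) :
  Zplus n =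
    (1 + (-1) ^+ (n - 1)) / (2 * n%:R)
    + ((n - 1)`!)%:R / 2 ^+ n * \sum_(1 <= r < n.+1) (2 ^+ r / r%:R).
Proof.
rewrite /Zplus -big_distrl /= big_split /= -alt_sum //.
case: n hn => // m _.
have -> : \sum_(0 <= i < m.+1) ((i`! * (m.+1 - i - 1)`!)%:R : rat) = (S m)%:R.
  rewrite /S natr_sum; apply: eq_big_nat => k _; congr (_%:R).
  by rewrite subn1 subSKn.
have HS := S_rat m.
have h2 : (2 ^+ m.+1) != 0 :> rat by rewrite expf_neq0.
have -> : (S m)%:R = ((m.+1)`!%:R * \sum_(1 <= r < m.+2) (2 ^+ r / r%:R)) / 2 ^+ m.+1 :> rat.
  by apply: (mulIf h2); rewrite HS divfK.
rewrite subn1 /= factS natrM.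
have hm : (m.+1)%:R != 0 :> rat by rewrite pnatr_eq0.
field.
rewrite h2 /=; have hm0 : (0:rat) <= m%:R by apply: ler0n.
apply/eqP => E; lra.
Qed.
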